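(* Let $X$ and $Y$ be nontrivial metrizable spaces. The following are equivalent: (1) $X$ is countable; (2) $Q_p(X,\mathbb{D})$ is Fr\'{e}chet-Urysohn; (3) $Q_p(X,Y)$ is Fr\'{e}chet-Urysohn; (4) $Q_p(X,Y)$ is first countable; (5) $Q_p(X,Y)$ is metrizable.
   Context: A function $f:X\to Y$ is quasicontinuous if for every $x\in X$, every open $V\ni f(x)$ and every open $U\ni x$ there is a nonempty open $W\subseteq U$ with $f(W)\subseteq V$. $Q_p(X,Y)$ is the set of all quasicontinuous functions $X\to Y$ with the topology of pointwise convergence; $\mathbb{D}=\{0,1\}$ is the discrete two-point space. A space $Z$ is Fr\'{e}chet-Urysohn if for every $A\subseteq Z$ and $z\in\overline{A}$ there is a sequence in $A$ converging to $z$. Nontrivial means having more than one point. *)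

(* Defs.v *)
From HB Require Import structures.
From mathcomp Require Import all_boot all_order all_algebra.
From mathcomp Require Import all_classical all_reals all_analysis.
From Stdlib Require Import Reals.

Set Implicit Arguments.
Unset Strict Implicit.
Unset Printing Implicit Defensive.

Local Open Scope classical_set_scope.

Definition metrizable_top {T : Type} (op : set (set T)) : Prop :=
  exists d : T -> T -> R,
    (forall x y, (0 <= d x y)%R) /\
    (forall x y, d x y = 0%R <-> x = y) /\
    (forall x y, d x y = d y x) /\
    (forall x y z, (d x z <= d x y + d y z)%R) /\
    (forall U : set T, op U <->
       (forall x, U x -> exists e : R, (0 < e)%R /\
          (forall y, (d x y < e)%R -> U y))).

Definition seq_converges {T : Type} (op : set (set T)) (u : nat -> T) (z : T)
  : Prop :=
  forall U, op U -> U z -> exists N, forall n, (N <= n)%N -> U (u n).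

Definition in_closure {T : Type} (op : set (set T)) (A : set T) (z : T) : Prop :=
  forall U, op U -> U z -> exists a, A a /\ U a.

Definition frechet_urysohn {T : Type} (op : set (set T)) : Prop :=
  forall (A : set T) (z : T), in_closure op A z ->
    exists u : nat -> T, (forall n, A (u n)) /\ seq_converges op u z.

Definition first_countable {T : Type} (op : set (set T)) : Prop :=
  forall z : T, exists B : nat -> set T,
    (forall n, op (B n) /\ B n z) /\
    (forall U, op U -> U z -> exists n, B n `<=` U).

Definition quasicontinuous {X Y : Type} (oX : set (set X)) (oY : set (set Y))
  (f : X -> Y) : Prop :=
  forall (x : X) (V : set Y) (U : set X),
    oY V -> V (f x) -> oX U -> U x ->
    exists W : set X, oX W /\ W !=set0 /\ W `<=` U /\ f @` W `<=` V.

Definition Qp {X Y : Type} (oX : set (set X)) (oY : set (set Y)) : Type :=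
  {f : X -> Y | quasicontinuous oX oY f}.

(* Topology of pointwise convergence on Q_p(X,Y): subspace of the product
   topology Y^X; U is open iff each of its points has a basic neighbourhood
   (finitely many points x, open sets V x around f x) contained in U. *)
Definition Qp_open {X Y : Type} (oX : set (set X)) (oY : set (set Y))
  : set (set (Qp oX oY)) :=
  fun U => forall f, U f ->
    exists (F : seq X) (V : X -> set Y),
      (forall x, List.In x F -> oY (V x) /\ V x (proj1_sig f x)) /\
      (forall g : Qp oX oY,
         (forall x, List.In x F -> V x (proj1_sig g x)) -> U g).

(* The discrete topology (every subset open); used for D = {0,1} = bool. *)
Definition discrete_top (T : Type) : set (set T) := setT.

Definition nontrivial (T : Type) : Prop := exists x y : T, x <> y.

Arguments Qp_open {X Y} oX oY.
Arguments quasicontinuous {X Y} oX oY f.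
Arguments metrizable_top {T} op.
Arguments frechet_urysohn {T} op.
Arguments first_countable {T} op.
Arguments discrete_top T : clear implicits.

(* Main.v *)
Set Warnings "-notation-overridden,-ambiguous-paths,-notation-incompatible-prefix".
Require Import Defs.
From HB Require Import structures.
From mathcomp Require Import all_boot all_order all_algebra.
From mathcomp Require Import all_classical all_reals all_analysis.
From Stdlib Require Import Reals Lra.
From mathcomp Require Import zify.
Set Implicit Arguments.
Unset Strict Implicit.
Local Open Scope classical_set_scope.
Local Open Scope R_scope.


Definition Metr {T : Type} (op : set (set T)) (d : T -> T -> R) : Prop :=
    (forall x y, (0 <= d x y)%R) /\
    (forall x y, d x y = 0%R <-> x = y) /\
    (forall x y, d x y = d y x) /\
    (forall x y z, (d x z <= d x y + d y z)%R) /\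
    (forall U : set T, op U <->
       (forall x, U x -> exists e : R, (0 < e)%R /\
          (forall y, (d x y < e)%R -> U y))).

Definition clm {T : Type} (d : T -> T -> R) (U : set T) (x : T) : Prop :=
  forall e, (0 < e)%R -> exists z, U z /\ (d x z < e)%R.

Section MetricBasics.
Variables (T : Type) (op : set (set T)) (d : T -> T -> R).
Hypothesis HM : Metr op d.

Lemma d_ge0 x y : 0 <= d x y. Proof. by case: HM. Qed.
Lemma d_xx x : d x x = 0. Proof. by case: HM => _ [H _]; apply (proj2 (H x x)). Qed.
Lemma d_sym x y : d x y = d y x. Proof. by case: HM => _ [_ [H _]]. Qed.
Lemma d_tri x y z : d x z <= d x y + d y z. Proof. by case: HM => _ [_ [_ [H _]]]. Qed.
Lemma d_eq x y : d x y = 0 -> x = y. Proof. by case: HM => _ [H _]; apply (proj1 (H x y)). Qed.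
Lemma d_pos x y : x <> y -> 0 < d x y.
Proof. move=> nxy; have := d_ge0 x y; case/Rle_lt_or_eq_dec => // /esym/d_eq. by []. Qed.

Lemma op_char U : op U <-> (forall x, U x -> exists e, 0 < e /\ (forall y, d x y < e -> U y)).
Proof. by case: HM => _ [_ [_ [_ H]]]. Qed.

Lemma ball_open x e : op (fun y => d x y < e).
Proof.
apply/op_char => y hy; exists (e - d x y); split; first lra.
move=> w hw; have := d_tri x y w; lra.
Qed.

Lemma op_ball U x : op U -> U x -> exists e, 0 < e /\ (forall y, d x y < e -> U y).
Proof. by move/op_char => H /H. Qed.

Lemma not_clm U x : ~ clm d U x -> exists e, 0 < e /\ forall z, U z -> e <= d x z.
Proof.
move=> H; apply: contrapT => H2; apply: H => e he.
apply: contrapT => H3; apply: H2; exists e; split => // z Uz.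
apply: contrapT => /Rnot_le_lt lt; apply: H3; by exists z.
Qed.

End MetricBasics.

Definition gfun {T Y : Type} (d : T -> T -> R) (U : set T) (y0 y1 : Y) (x : T) : Y :=
  if pselect (clm d U x) then y1 else y0.

Lemma gfun_qc {T Y : Type} (op : set (set T)) (d : T -> T -> R) (opY : set (set Y))
  (U : set T) (y0 y1 : Y) :
  Metr op d -> op U -> quasicontinuous op opY (gfun d U y0 y1).
Proof.
move=> HM oU x V O oV Vx oO Ox.
have [e [e0 He]] := op_ball HM oO Ox.
rewrite /gfun in Vx *.
case: (pselect (clm d U x)) Vx => [c|nc] Vx.
- have [z [Uz dz]] := c e e0.
  have [e' [e'0 He']] := op_ball HM oU Uz.
  set r := Rmin e' (e - d x z).
  have r0 : (0 < r)%R by apply: Rmin_pos => //; lra.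
  exists (fun w => (d z w < r)%R); split; first exact: (ball_open HM).
  split; first by exists z; rewrite (d_xx HM).
  split.
  + move=> w hw; apply: He; have := d_tri HM x z w.
    have := Rmin_r e' (e - d x z); rewrite -/r; lra.
  + move=> _ [w hw <-]; case: pselect => // ncw; exfalso; apply: ncw.
    move=> e2 he2; exists w; split; last by rewrite (d_xx HM).
    apply: He'; have := Rmin_l e' (e - d x z); rewrite -/r; lra.
- have [e2 [e20 He2]] := not_clm nc.
  set r := Rmin e (e2 / 2).
  have r0 : (0 < r)%R by apply: Rmin_pos => //; lra.
  exists (fun w => (d x w < r)%R); split; first exact: (ball_open HM).
  split; first by exists x; rewrite (d_xx HM).
  split.
  + move=> w hw; apply: He; have := Rmin_l e (e2/2); rewrite -/r; lra.
  + move=> _ [w hw <-]; case: pselect => // cw.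
    have [z [Uz dz]] := cw (e2 / 2) ltac:(lra).
    have := He2 z Uz; have := d_tri HM x w z; have := Rmin_r e (e2/2); rewrite -/r; lra.
Qed.

Lemma countableU2 T (A B : set T) : countable A -> countable B -> countable (A `|` B).
Proof.
move=> cA cB.
have -> : A `|` B = \bigcup_(b in [set: bool]) (if b then A else B).
  apply/seteqP; split => x.
  - by case=> h; [exists true|exists false].
  - by case=> -[] _ h; [left|right].
by apply: bigcup_countable => // -[].
Qed.

Lemma countable_list T (l : seq T) : countable [set x | List.In x l].
Proof.
elim: l => [|a l IH].
  by have -> : [set x | List.In x [::]] = @set0 T by apply/seteqP; split => x.
have -> : [set x | List.In x (a :: l)] = [set a] `|` [set x | List.In x l].
  apply/seteqP; split => x /=; first by case=> [->|h]; [left|right].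
  by case=> [->|h]; [left|right].
apply: countableU2 => //; exact: countable1.
Qed.

Lemma out_of_lists T (P : set T) : ~ countable P ->
  forall Gs : nat -> seq T, exists q, P q /\ forall n, ~ List.In q (Gs n).
Proof.
move=> nc Gs; apply: contrapT => H; apply: nc.
apply: (@sub_countable _ _ _ (\bigcup_(n in [set: nat]) [set x | List.In x (Gs n)])).
  apply: subset_card_le => q Pq; apply: contrapT => H2; apply: H; exists q; split => // n Hn.
  by apply: H2; exists n.
by apply: bigcup_countable => // n _; exact: countable_list.
Qed.

Lemma arch e : 0 < e -> exists N : nat, / (INR N + 1) < e.
Proof.
move=> e0; have [N [h1 h2]] := archimed_cor1 e e0.
exists N; apply: Rle_lt_trans h1; apply: Rinv_le_contravar; last lra.
exact: lt_0_INR.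
Qed.

Lemma inv_pos (n : nat) : 0 < / (INR n + 1).
Proof. apply: Rinv_0_lt_compat; have := pos_INR n; lra. Qed.

Lemma inv_le (N n : nat) : (N <= n)%nat -> / (INR n + 1) <= / (INR N + 1).
Proof.
move=> h; apply: Rinv_le_contravar; first by have := pos_INR N; lra.
have : (N <= n)%coq_nat by apply/leP.
move/le_INR; lra.
Qed.

Lemma fin_min A (l : seq A) (Q : A -> R -> Prop) :
  (forall a, List.In a l -> exists r, 0 < r /\ forall r', 0 < r' -> r' <= r -> Q a r') ->
  exists r, 0 < r /\ forall a, List.In a l -> forall r', 0 < r' -> r' <= r -> Q a r'.
Proof.
elim: l => [|a l IH] H; first by exists 1; split => //; lra.
have [r1 [r10 H1]] := H a (or_introl erefl).
have [r2 [r20 H2]] : exists r, 0 < r /\ forall a, List.In a l -> forall r', 0 < r' -> r' <= r -> Q a r'.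
  by apply: IH => b hb; apply: H; right.
exists (Rmin r1 r2); split; first exact: Rmin_pos.
move=> b [<-|hb] r' h0 h1.
- by apply: H1 => //; apply: Rle_trans h1 (Rmin_l _ _).
- by apply: H2 => //; apply: Rle_trans h1 (Rmin_r _ _).
Qed.

Lemma fin_min_nat (N : nat) (Q : nat -> R -> Prop) :
  (forall n, (n < N)%nat -> exists r, 0 < r /\ forall r', 0 < r' -> r' <= r -> Q n r') ->
  exists r, 0 < r /\ forall n, (n < N)%nat -> forall r', 0 < r' -> r' <= r -> Q n r'.
Proof.
elim: N => [|N IH] H; first by exists 1; split; [lra| move=> n; rewrite ltn0].
have [r1 [r10 H1]] := H N (ltnSn N).
have [r2 [r20 H2]] : exists r, 0 < r /\ forall n, (n < N)%nat -> forall r', 0 < r' -> r' <= r -> Q n r'.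
  by apply: IH => n hn; apply: H; apply: ltnW.
exists (Rmin r1 r2); split; first exact: Rmin_pos.
move=> n hn r' h0 h1; have [->|hn'] : n = N \/ (n < N)%nat by lia.
- by apply: H1 => //; apply: Rle_trans h1 (Rmin_l _ _).
- by apply: H2 => //; apply: Rle_trans h1 (Rmin_r _ _).
Qed.

Lemma const_qc {X Y : Type} (opX : set (set X)) (opY : set (set Y)) (y : Y) :
  quasicontinuous opX opY (fun _ => y).
Proof.
move=> x V O oV Vy oO Ox; exists O; split => //; split; first by exists x.
by split => // _ [w _ <-].
Qed.

Lemma nonFU {X Y : Type} (opX : set (set X)) (dX : X -> X -> R)
  (opY : set (set Y)) (dY : Y -> Y -> R) (y0 y1 : Y) (U : seq X -> set X) :
  Metr opX dX -> Metr opY dY -> y0 <> y1 ->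
  (forall G, opX (U G)) -> (forall G x, List.In x G -> clm dX (U G) x) ->
  (forall Gs : nat -> seq X, exists x, forall N, exists n, (N <= n)%nat /\ ~ clm dX (U (Gs n)) x) ->
  ~ frechet_urysohn (Qp_open opX opY).
Proof.
move=> HX HY ne oU inU H3 FU.
pose z : Qp opX opY := exist _ (fun _ => y1) (@const_qc X Y opX opY y1).
pose A := fun f : Qp opX opY => exists G, proj1_sig f = gfun dX (U G) y0 y1.
have cl : in_closure (Qp_open opX opY) A z.
  move=> U' oU' U'z; have [F [V [HV Hg]]] := oU' z U'z.
  exists (exist _ (gfun dX (U F) y0 y1) (@gfun_qc X Y opX dX opY (U F) y0 y1 HX (oU F))).
  split; first by exists F.
  apply: Hg => x Fx /=; rewrite /gfun; destruct (pselect (clm dX (U F) x)) as [c|nc].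
  + exact: (proj2 (HV x Fx)).
  + by exfalso; apply: nc; apply: inU.
have [u [Au cu]] := FU A z cl.
have [Gs HGs] := choice Au.
have [x Hx] := H3 Gs.
have r0 : 0 < dY y0 y1 by apply: (d_pos HY).
have oB : Qp_open opX opY (fun f => dY y1 (proj1_sig f x) < dY y0 y1).
  move=> f hf; exists [:: x], (fun _ => fun y => dY y1 y < dY y0 y1); split.
  + by move=> x' [<-|[]]; split => //; exact: (ball_open HY).
  + by move=> g Hg; apply: Hg; left.
have [N HN] := cu _ oB ltac:(by rewrite /= (d_xx HY)).
have [n [Nn ncl]] := Hx N.
have := HN n Nn; rewrite /= HGs /gfun; destruct (pselect (clm dX (U (Gs n)) x)) as [c|nc] => //.
rewrite (d_sym HY); lra.
Qed.

Lemma metr_FU {T : Type} (op : set (set T)) d : Metr op d -> frechet_urysohn op.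
Proof.
move=> HM A z cl.
have H : forall n : nat, exists a, A a /\ d z a < / (INR n + 1).
  move=> n; have [a [Aa ha]] := cl _ (ball_open HM z (/ (INR n + 1))) ltac:(rewrite /= (d_xx HM); exact: inv_pos).
  by exists a.
have [u Hu] := choice H; exists u; split; first by move=> n; case: (Hu n).
move=> U oU Uz; have [e [e0 He]] := op_ball HM oU Uz.
have [N HN] := arch e0; exists N => n Nn; apply: He.
case: (Hu n) => _ h; have := inv_le Nn; lra.
Qed.

Lemma metr_FC {T : Type} (op : set (set T)) d : Metr op d -> first_countable op.
Proof.
move=> HM z; exists (fun n => fun y => d z y < / (INR n + 1)); split.
  by move=> n; split; [exact: (ball_open HM z (/ (INR n + 1)))|rewrite /= (d_xx HM); exact: inv_pos].
move=> U oU Uz; have [e [e0 He]] := op_ball HM oU Uz.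
have [N HN] := arch e0; exists N => y hy; apply: He; lra.
Qed.

Definition Pcond {X : Type} (d : X -> X -> R) (P : set X) :=
  forall (G : seq X) x (n : nat), List.In x G -> exists y s, 0 < s /\ s <= / (INR n + 1) /\
    d x y < / (INR n + 1) /\ forall q, P q -> ~ List.In q G -> 2 * s <= d y q.

Section PFam.
Variables (X : Type) (op : set (set X)) (d : X -> X -> R).
Hypothesis HM : Metr op d.

Lemma Pfam P : Pcond d P -> exists U : seq X -> set X, (forall G, op (U G)) /\
  (forall G x, List.In x G -> clm d (U G) x) /\
  (forall G q, P q -> ~ List.In q G -> ~ clm d (U G) q).
Proof.
move=> PC.
have H : forall t : seq X * X * nat, exists p : X * R, List.In t.1.2 t.1.1 ->
   (0 < p.2 /\ p.2 <= / (INR t.2 + 1) /\ d t.1.2 p.1 < / (INR t.2 + 1) /\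
    forall q, P q -> ~ List.In q t.1.1 -> 2 * p.2 <= d p.1 q).
  case=> [[G x] n] /=; case: (pselect (List.In x G)) => h.
  - by have [y [s Hs]] := PC G x n h; exists (y, s) => _.
  - by exists (x, 1).
have [f Hf] := choice H.
exists (fun G z => exists x n, List.In x G /\ d (f (G, x, n)).1 z < (f (G, x, n)).2).
split.
  move=> G; apply/(op_char HM) => z [x [n [hx hz]]].
  exists ((f (G, x, n)).2 - d (f (G, x, n)).1 z); split; first lra.
  move=> w hw; exists x, n; split => //; have := d_tri HM (f (G, x, n)).1 z w; lra.
split.
  move=> G x hx e e0; have [N HN] := arch e0.
  have [s0 [_ [hy _]]] := Hf (G, x, N) hx.
  exists (f (G, x, N)).1; split; last by simpl in hy; lra.
  by exists x, N; split => //; rewrite (d_xx HM).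
move=> G q Pq nq cl.
suff [r [r0 Hr]] : exists r, 0 < r /\ forall x, List.In x G -> forall r', 0 < r' -> r' <= r ->
    forall n z, d (f (G, x, n)).1 z < (f (G, x, n)).2 -> r' <= d q z.
  have [z [[x [n [hx hz]]] dz]] := cl r r0.
  have := Hr x hx r r0 (Rle_refl r) n z hz; lra.
apply: fin_min => x hx.
have xq : x <> q by move=> e; apply: nq; rewrite -e.
have dpos := d_pos HM xq.
have [N HN] := arch (ltac:(lra) : 0 < d x q / 4).
have [r1 [r10 H1]] := @fin_min_nat N (fun n r' => forall z, d (f (G, x, n)).1 z < (f (G, x, n)).2 -> r' <= d q z)
  ltac:(move=> n hn; have [s0 [_ [_ hq]]] := Hf (G, x, n) hx; simpl in s0, hq;
        exists (f (G, x, n)).2; split => // r' h0 h1 z hz;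
        have := hq q Pq nq; have := d_tri HM (f (G, x, n)).1 z q; rewrite (d_sym HM z q); lra).
exists (Rmin (d x q / 2) r1); split; first by apply: Rmin_pos; lra.
move=> r' h0 h1 n z hz; case: (leqP N n) => hn.
- have [s0 [hs [hy _]]] := Hf (G, x, n) hx; simpl in s0, hs, hy.
  have := inv_le hn; have := d_tri HM x (f (G, x, n)).1 z; have := d_tri HM x z q.
  have := Rmin_l (d x q / 2) r1; rewrite (d_sym HM z q) /=; lra.
- exact: (H1 n hn r' h0 (Rle_trans _ _ _ h1 (Rmin_r _ _)) z hz).
Qed.

Lemma Pcond1 p : Pcond d [set p].
Proof.
move=> G x n hx; exists x.
have i0 := inv_pos n.
case: (pselect (x = p)) => [xp|xp].
- exists (/ (INR n + 1)); split => //; split; first lra.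
  split; first by rewrite (d_xx HM).
  by move=> q -> nq; exfalso; apply: nq; rewrite -xp.
- have dp := d_pos HM xp.
  exists (Rmin (/ (INR n + 1)) (d x p / 2)); split; first by apply: Rmin_pos; lra.
  split; first exact: Rmin_l.
  split; first by rewrite (d_xx HM).
  move=> q -> _; have := Rmin_r (/ (INR n + 1)) (d x p / 2); lra.
Qed.

Definition NDm (P : set X) := forall x e, 0 < e -> exists y s, d x y < e /\ 0 < s /\ forall q, P q -> s <= d y q.

Lemma Pcond_ND P : NDm P -> Pcond d P.
Proof.
move=> ND G x n hx; have [y [s [hy [s0 hs]]]] := ND x _ (inv_pos n).
exists y, (Rmin (/ (INR n + 1)) (s / 2)); split; first by apply: Rmin_pos; [exact: inv_pos|lra].
split; first exact: Rmin_l.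
split => // q Pq _; have := hs q Pq; have := Rmin_r (/ (INR n + 1)) (s / 2); lra.
Qed.

Definition sepm (e : R) (S : set X) := forall a b, S a -> S b -> a <> b -> e <= d a b.

Lemma Pcond_sep e S : 0 < e -> sepm e S -> Pcond d S.
Proof.
move=> e0 sS G x n hx; exists x.
have i0 := inv_pos n.
case: (pselect (exists q0, S q0 /\ ~ List.In q0 G /\ d x q0 < e / 2)) => [[q0 [Sq0 [nq0 dq0]]]|nex].
- have xq0 : x <> q0 by move=> E; apply: nq0; rewrite -E.
  have dp := d_pos HM xq0.
  exists (Rmin (/ (INR n + 1)) (Rmin (e / 4) (d x q0 / 2))).
  have m1 := Rmin_l (/ (INR n + 1)) (Rmin (e / 4) (d x q0 / 2)).
  have m2 := Rmin_r (/ (INR n + 1)) (Rmin (e / 4) (d x q0 / 2)).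
  have m3 := Rmin_l (e / 4) (d x q0 / 2).
  have m4 := Rmin_r (e / 4) (d x q0 / 2).
  split; first by apply: Rmin_pos => //; apply: Rmin_pos; lra.
  split => //; split; first by rewrite (d_xx HM).
  move=> q Sq nq; case: (pselect (q = q0)) => [->|qq0]; first lra.
  have := sS q q0 Sq Sq0 qq0; have := d_tri HM q x q0; rewrite (d_sym HM q x); lra.
- exists (Rmin (/ (INR n + 1)) (e / 4)).
  have m1 := Rmin_l (/ (INR n + 1)) (e / 4).
  have m2 := Rmin_r (/ (INR n + 1)) (e / 4).
  split; first by apply: Rmin_pos => //; lra.
  split => //; split; first by rewrite (d_xx HM).
  move=> q Sq nq; apply: Rnot_lt_le => h; apply: nex; exists q; split => //; split => //; lra.
Qed.

End PFam.

Lemma enum_of_countable {T : Type} (A : set T) (x0 : T) : countable A ->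
  exists e : nat -> T, forall x, A x -> exists n, e n = x.
Proof.
move/countable_injP => [f finj].
exists (fun n => match pselect (exists x, A x /\ f x = n) with
                 | left h => proj1_sig (cid h) | right _ => x0 end).
move=> x Ax; exists (f x).
case: pselect => [h|nh]; last by exfalso; apply: nh; exists x.
case: (cid h) => y [Ay fy] /=.
by apply: finj; rewrite ?inE //; apply: mem_set.
Qed.

Lemma discrete_metr : Metr (discrete_top bool) (fun a b => if a == b then 0 else 1).
Proof.
split; first by move=> [] [] /=; lra.
split; first by move=> [] [] /=; split => // h; lra.
split; first by move=> [] [].
split; first by move=> [] [] [] /=; lra.
move=> U; split => // _ x Ux; exists 1; split; first lra.
by move=> y; case: eqP => [<-|] //; lra.
Qed.

Section QpMetric.
Variables (X Y : Type) (opX : set (set X)) (opY : set (set Y)) (dY : Y -> Y -> R).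
Hypothesis HY : Metr opY dY.
Variable e : nat -> X.
Hypothesis esurj : forall x, exists n, e n = x.

Definition term n (f g : Qp opX opY) := Rmin (/ (INR n + 1)) (dY (proj1_sig f (e n)) (proj1_sig g (e n))).

Lemma term_ge0 n f g : 0 <= term n f g.
Proof. rewrite /term; apply: Rmin_glb; [have := inv_pos n; lra | exact: (d_ge0 HY)]. Qed.

Lemma term_le1 n f g : term n f g <= 1.
Proof.
rewrite /term; apply: Rle_trans (Rmin_l _ _) _.
rewrite -Rinv_1; apply: Rinv_le_contravar; first lra; have := pos_INR n; lra.
Qed.

Definition Eterm f g := fun r => exists n, r = term n f g.

Lemma Eterm_bound f g : bound (Eterm f g).
Proof. by exists 1 => r [n ->]; exact: term_le1. Qed.

Lemma Eterm_ne f g : exists r, Eterm f g r.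
Proof. by exists (term 0 f g), 0%nat. Qed.

Definition dQ f g := proj1_sig (completeness _ (Eterm_bound f g) (Eterm_ne f g)).

Lemma term_le_dQ n f g : term n f g <= dQ f g.
Proof. rewrite /dQ; case: completeness => m [ub _] /=; apply: ub; by exists n. Qed.

Lemma dQ_le f g r : (forall n, term n f g <= r) -> dQ f g <= r.
Proof. move=> H; rewrite /dQ; case: completeness => m [_ lub] /=; apply: lub => _ [n ->]; exact: H. Qed.

Lemma Rmin_tri a x y w : 0 <= a -> 0 <= x -> 0 <= y -> 0 <= w -> x <= y + w ->
  Rmin a x <= Rmin a y + Rmin a w.
Proof.
move=> *; rewrite /Rmin; case: Rle_dec; case: Rle_dec; case: Rle_dec; lra.
Qed.

Lemma Rmin_lt_aux a t b : Rmin a t < Rmin a b -> t < b.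
Proof. rewrite /Rmin; case: Rle_dec; case: Rle_dec; lra. Qed.

Lemma Qp_metr : Metr (Qp_open opX opY) dQ.
Proof.
split; first by move=> f g; apply: Rle_trans (term_le_dQ 0 f g); exact: term_ge0.
split.
  move=> f g; split => [h|<-].
  - case: f g h => [f qf] [g qg] h; apply: eq_exist; apply: funext => x.
    have [n <-] := esurj x.
    have : term n (exist _ f qf) (exist _ g qg) <= 0 by rewrite -h; exact: term_le_dQ.
    rewrite /term /= /Rmin; have := inv_pos n; have := d_ge0 HY (f (e n)) (g (e n)).
    case: Rle_dec => _ ? ? ?; first lra.
    by apply: (d_eq HY); lra.
  - apply: Rle_antisym; last by apply: Rle_trans (term_le_dQ 0 f f); exact: term_ge0.
    apply: dQ_le => n; rewrite /term (d_xx HY) /Rmin; case: Rle_dec; have := inv_pos n; lra.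
split.
  have H : forall f g, dQ f g <= dQ g f.
    by move=> f g; apply: dQ_le => n; rewrite /term (d_sym HY); apply: (term_le_dQ n g f).
  by move=> f g; apply: Rle_antisym.
split.
  move=> f g h; apply: dQ_le => n; apply: Rle_trans (Rplus_le_compat _ _ _ _ (term_le_dQ n f g) (term_le_dQ n g h)).
  apply: Rmin_tri; [by have := inv_pos n; lra|exact: (d_ge0 HY)|exact: (d_ge0 HY)|exact: (d_ge0 HY)|exact: (d_tri HY)].
move=> U; split.
- move=> oU f Uf; have [F [V [HV Hg]]] := oU f Uf.
  have [r [r0 Hr]] : exists r, 0 < r /\ forall x, List.In x F -> forall r', 0 < r' -> r' <= r ->
      forall g, dQ f g < r' -> V x (proj1_sig g x).
    apply: fin_min => x hx; have [oV Vx] := HV x hx.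
    have [eps [eps0 Heps]] := op_ball HY oV Vx.
    have [n en] := esurj x.
    exists (Rmin (/ (INR n + 1)) eps); split; first by apply: Rmin_pos => //; exact: inv_pos.
    move=> r' h0 h1 g hg; apply: Heps; rewrite -en.
    apply: (@Rmin_lt_aux (/ (INR n + 1))).
    have := term_le_dQ n f g; rewrite /term; lra.
  exists r; split => // g hg; apply: Hg => x hx; exact: (Hr x hx r r0 (Rle_refl r) g hg).
- move=> H f Uf; have [r [r0 Hr]] := H f Uf.
  have [N HN] := arch r0.
  exists (List.map e (List.seq 0 (S N))), (fun x => fun y => dY (proj1_sig f x) y < r / 2).
  split.
    by move=> x _; split; [exact: (ball_open HY) | rewrite /= (d_xx HY); lra].
  move=> g Hg; apply: Hr.
  apply: Rle_lt_trans (_ : Rmax (r / 2) (/ (INR N + 1)) < r); last by apply: Rmax_lub_lt; lra.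
  apply: dQ_le => n; case: (leqP n N) => hn.
  + have : List.In (e n) (List.map e (List.seq 0 (S N))).
      by apply: List.in_map; apply/List.in_seq; split; [lia| move/leP: hn; lia].
    move/Hg => h; rewrite /term; apply: Rle_trans (Rmax_l _ _).
    by apply: Rle_trans (Rmin_r _ _) _; lra.
  + rewrite /term; apply: Rle_trans (Rmax_r _ _); apply: Rle_trans (Rmin_l _ _) _.
    by apply: inv_le; apply: ltnW.
Qed.

End QpMetric.

Lemma countable_Qp_metr {X Y : Type} (opX : set (set X)) (opY : set (set Y)) (dY : Y -> Y -> R) (x0 : X) :
  Metr opY dY -> countable [set: X] -> exists d, Metr (Qp_open opX opY) d.
Proof.
move=> HY cX; have [e He] := enum_of_countable x0 cX.
exists (@dQ X Y opX opY dY e); apply: (@Qp_metr X Y opX opY dY HY e) => x; exact: He.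
Qed.

Lemma In_mem (T : eqType) (x : T) (l : seq T) : List.In x l <-> x \in l.
Proof.
elim: l => [|a l IH] //=; rewrite in_cons; split.
- by case=> [->|/IH ->]; rewrite ?eqxx ?orbT.
- by case/orP => [/eqP ->|/IH h]; [left|right].
Qed.

Lemma fin_max A (l : seq A) (Q : A -> nat -> Prop) :
  (forall a, List.In a l -> exists N, forall n, (N <= n)%nat -> Q a n) ->
  exists N, forall a, List.In a l -> forall n, (N <= n)%nat -> Q a n.
Proof.
elim: l => [|a l IH] H; first by exists 0%nat.
have [N1 H1] := H a (or_introl erefl).
have [N2 H2] : exists N, forall b, List.In b l -> forall n, (N <= n)%nat -> Q b n.
  by apply: IH => b hb; apply: H; right.
exists (N1 + N2)%nat => b [<-|hb] n hn; [apply: H1|apply: H2] => //; lia.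
Qed.

Lemma fin_max_nat (J : nat) (Q : nat -> nat -> Prop) :
  (forall a, (a < J)%nat -> exists N, forall n, (N <= n)%nat -> Q a n) ->
  exists N, forall a, (a < J)%nat -> forall n, (N <= n)%nat -> Q a n.
Proof.
elim: J => [|J IH] H; first by exists 0%nat.
have [N1 H1] := H J (ltnSn J).
have [N2 H2] : exists N, forall b, (b < J)%nat -> forall n, (N <= n)%nat -> Q b n.
  by apply: IH => b hb; apply: H; lia.
exists (N1 + N2)%nat => b hb n hn; have [->|hb'] : b = J \/ (b < J)%nat by lia.
- by apply: H1; lia.
- by apply: H2 => //; lia.
Qed.

Lemma many_points (X : choiceType) : ~ countable [set: X] ->
  forall m, exists l : seq X, uniq l /\ size l = m.
Proof.
move=> unc; elim=> [|m [l [ul sl]]]; first by exists [::].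
have [x [_ hx]] := out_of_lists unc (fun _ => l).
exists (x :: l); split; last by rewrite /= sl.
rewrite /= ul andbT; apply/negP => h; apply: (hx 0%nat); exact/In_mem.
Qed.

Lemma pigeon (X : eqType) (s t : seq X) (f : X -> X) :
  uniq s -> (size t < size s)%nat -> (forall a, a \in s -> f a \in t) ->
  exists a b, a \in s /\ b \in s /\ a <> b /\ f a = f b.
Proof.
move=> us st hf; apply: contrapT => H.
have inj : {in s &, injective f}.
  move=> a b ha hb fab; apply: contrapT => nab; apply: H; by exists a, b.
have : uniq (map f s) by rewrite map_inj_in_uniq.
move/uniq_leq_size => /(_ t) h.
have : (size (map f s) <= size t)%nat by apply: h => y /mapP [a ha ->]; exact: hf.
by rewrite size_map; lia.
Qed.

Section CaseC.
Variables (X : choiceType) (op : set (set X)) (d : X -> X -> R).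
Hypothesis HM : Metr op d.
Hypothesis unc : ~ countable [set: X].
Hypothesis hND : forall P, NDm d P -> countable P.
Variable dd : nat -> X.
Hypothesis dense : forall x e, 0 < e -> exists k, d x (dd k) < e.

Definition Bk k m := fun y => d (dd k) y < / (INR m + 1).

Lemma sep_lists m : exists p : seq X * R, uniq p.1 /\ size p.1 = m.+1 /\ 0 < p.2 /\
  forall a b, a \in p.1 -> b \in p.1 -> a <> b -> 4 * p.2 < d a b.
Proof.
have [l [ul sl]] := many_points unc m.+1.
have [r [r0 Hr]] := @fin_min _ l (fun a r => forall b, List.In b l -> a <> b -> 4 * r < d a b)
  ltac:(move=> a ha;
    have [r [r0 Hr]] := @fin_min _ l (fun b r => a <> b -> 4 * r < d a b)
      ltac:(move=> b hb; case: (pselect (a = b)) => [ab|ab];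
        [by exists 1; split => //; lra
        |have := d_pos HM ab => dp; exists (d a b / 8); split; [lra| move=> r' h0 h1 _; lra]]);
    by exists r; split => // r' h0 h1 b hb; apply: Hr).
exists (l, r); split => //; split => //; split => // a b ha hb nab.
exact: (Hr a (proj2 (In_mem _ _) ha) r r0 (Rle_refl r) b (proj2 (In_mem _ _) hb) nab).
Qed.

Lemma radius (rho : R) G : 0 < rho -> exists r, 0 < r /\ r <= rho /\
  forall k m, (k <= size G)%nat -> (m <= size G)%nat -> (exists b, Bk k m b /\ ~ List.In b G) ->
    exists b, Bk k m b /\ forall g, List.In g G -> 2 * r <= d b g.
Proof.
move=> rho0.
have [r1 [r10 H1]] := @fin_min_nat (size G).+1 (fun k r => forall m, (m < (size G).+1)%nat ->
   (exists b, Bk k m b /\ ~ List.In b G) -> exists b, Bk k m b /\ forall g, List.In g G -> 2 * r <= d b g)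
  ltac:(move=> k hk;
    have [r [r0 Hr]] := @fin_min_nat (size G).+1 (fun m r =>
       (exists b, Bk k m b /\ ~ List.In b G) -> exists b, Bk k m b /\ forall g, List.In g G -> 2 * r <= d b g)
      ltac:(move=> m hm; case: (pselect (exists b, Bk k m b /\ ~ List.In b G)) => [[b [hb nb]]|nex];
        [have [r [r0 Hr]] := @fin_min _ G (fun g r => 2 * r <= d b g)
           ltac:(move=> g hg; have bg : b <> g := fun E => nb (eq_ind_r (fun z => List.In z G) hg E);
                 have := d_pos HM bg => dp; exists (d b g / 2); split; [lra|move=> r' h0 h1; lra]);
         by exists r; split => // r' h0 h1 _; exists b; split => // g hg; apply: Hr
        |by exists 1; split; [lra| move=> r' _ _ h]]);
    by exists r; split => // r' h0 h1 m hm; apply: Hr).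
exists (Rmin rho r1); split; first exact: Rmin_pos.
split; first exact: Rmin_l.
move=> k m hk hm; apply: (H1 k _ (Rmin rho r1)) => //; try lia.
  exact: Rmin_pos.
exact: Rmin_r.
Qed.

Lemma caseC : exists U : seq X -> set X, (forall G, op (U G)) /\
  (forall G x, List.In x G -> clm d (U G) x) /\
  (forall Gs : nat -> seq X, exists x, forall N0, exists n, (N0 <= n)%nat /\ ~ clm d (U (Gs n)) x).
Proof.
have [TR HTR] := choice sep_lists.
have Hr : forall G, exists r, 0 < r /\ r <= (TR (size G)).2 /\
  forall k m, (k <= size G)%nat -> (m <= size G)%nat -> (exists b, Bk k m b /\ ~ List.In b G) ->
    exists b, Bk k m b /\ forall g, List.In g G -> 2 * r <= d b g.
  by move=> G; apply: radius; case: (HTR (size G)) => _ [_ [h _]].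
have [rad Hrad] := choice Hr.
pose U := fun G z => exists g, List.In g G /\ d g z < rad G.
exists U; split.
  move=> G; apply/(op_char HM) => z [g [hg hz]].
  exists (rad G - d g z); split; first lra.
  move=> w hw; exists g; split => //; have := d_tri HM g z w; lra.
split.
  move=> G x hx e e0; exists x; split; last by rewrite (d_xx HM).
  exists x; split => //; rewrite (d_xx HM); by case: (Hrad G).
move=> Gs; apply: contrapT => Hn.
have conv : forall x, exists N0, forall n, (N0 <= n)%nat -> clm d (U (Gs n)) x.
  move=> x; apply: contrapT => h1; apply: Hn; exists x => N0; apply: contrapT => h2; apply: h1.
  exists N0 => n hn; apply: contrapT => h3; apply: h2; by exists n.
pose F := fun N0 x => forall n, (N0 <= n)%nat -> clm d (U (Gs n)) x.
have [N0 [k [m [ncB BF]]]] : exists N0 k m, ~ countable (Bk k m) /\ Bk k m `<=` F N0.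
  apply: contrapT => H1; apply: unc.
  have cF : forall N0, countable (F N0).
    move=> N0; pose Int := fun x => exists e, 0 < e /\ forall y, d x y < e -> F N0 y.
    have sub : F N0 `<=` (\bigcup_(p in [set p : nat * nat | Bk p.1 p.2 `<=` F N0]) Bk p.1 p.2) `|`
                         [set x | F N0 x /\ ~ Int x].
      move=> x Fx; case: (pselect (Int x)) => [[e [e0 He]]|nI]; last by right.
      left; have [m' Hm'] := arch (ltac:(lra) : 0 < e / 2).
      have [k' Hk'] := dense x (inv_pos m').
      exists (k', m') => /=; last by rewrite /Bk (d_sym HM).
      move=> y hy; apply: He; have := d_tri HM x (dd k') y; rewrite /Bk in hy; lra.
    apply: (sub_countable (subset_card_le sub)); apply: countableU2.
      apply: bigcup_countable => // p hp; apply: contrapT => nc; apply: H1.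
      by exists N0, p.1, p.2.
    apply: hND => x e e0.
    case: (pselect (forall y, d x y < e / 2 -> F N0 y)) => [hall|nall].
    - exists x, (e / 4); split; first by rewrite (d_xx HM); lra.
      split; first lra.
      move=> q [Fq nIq]; apply: Rnot_lt_le => hq; apply: nIq.
      exists (e / 4); split; first lra.
      move=> y hy; apply: hall; have := d_tri HM x q y; lra.
    - have [y [hy nFy]] : exists y, d x y < e / 2 /\ ~ F N0 y.
        apply: contrapT => h; apply: nall => y hy; apply: contrapT => nF; apply: h; by exists y.
      have [n [hn nc]] : exists n, (N0 <= n)%nat /\ ~ clm d (U (Gs n)) y.
        apply: contrapT => h; apply: nFy => n hn; apply: contrapT => nc; apply: h; by exists n.
      have [eps [eps0 Heps]] := not_clm nc.
      exists y, (eps / 2); split; first lra.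
      split; first lra.
      move=> q [Fq _]; apply: Rnot_lt_le => hq.
      have [z [Uz dz]] := Fq n hn (eps / 2) ltac:(lra).
      have := Heps z Uz; have := d_tri HM y q z; lra.
  have : [set: X] `<=` \bigcup_(N0 in [set: nat]) F N0.
    by move=> x _; have [N0 HN] := conv x; exists N0.
  move/subset_card_le/sub_countable; apply; apply: bigcup_countable => // N0 _; exact: cF.
have hsz : forall n, (N0 <= n)%nat -> (size (Gs n) < k + m)%nat.
  move=> n hn; apply: contrapT => hs.
  have [b [Bb nb]] := out_of_lists ncB (fun _ => Gs n).
  have [_ [_ R1]] := Hrad (Gs n).
  have [b' [Bb' Hb']] := R1 k m ltac:(lia) ltac:(lia) (ex_intro _ b (conj Bb (nb 0%nat))).
  have [z [[g [hg hz]] dz]] := BF b' Bb' n hn (rad (Gs n)) ltac:(by case: (Hrad (Gs n))).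
  have := Hb' g hg; have := d_tri HM b' z g; rewrite (d_sym HM z g); lra.
have [N2 HN2] := @fin_max_nat (k + m)%nat (fun mm n => forall t, List.In t (TR mm).1 -> clm d (U (Gs n)) t)
  ltac:(move=> mm hmm; have [N3 HN3] := @fin_max _ (TR mm).1 (fun t n => clm d (U (Gs n)) t)
          ltac:(move=> t _; exact: conv);
        by exists N3 => n hn t ht; apply: HN3).
pose n := (N0 + N2)%nat.
have hsz' := hsz n ltac:(rewrite /n; lia).
have [ul [sl [rho0 sepT]]] := HTR (size (Gs n)).
have [r0 [rle _]] := Hrad (Gs n).
have hclT : forall t, t \in (TR (size (Gs n))).1 -> clm d (U (Gs n)) t.
  by move=> t ht; apply: (HN2 (size (Gs n)) hsz' n ltac:(rewrite /n; lia)); exact/In_mem.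
have hphi : forall t, exists g, t \in (TR (size (Gs n))).1 ->
    g \in Gs n /\ d t g < 2 * (TR (size (Gs n))).2.
  move=> t; case: (pselect (t \in (TR (size (Gs n))).1)) => ht; last by exists t.
  have [z [[g [hg hz]] dz]] := hclT t ht _ rho0.
  exists g => _; split; first exact/In_mem.
  have := d_tri HM t z g; rewrite (d_sym HM z g); lra.
have [phi Hphi] := choice hphi.
have [a [b [ha [hb [nab fab]]]]] := pigeon ul ltac:(rewrite sl; exact: ltnSn)
   (fun a ha => proj1 (Hphi a ha)).
have := sepT a b ha hb nab.
have [_ h1] := Hphi a ha; have [_ h2] := Hphi b hb.
have e1 := d_tri HM a (phi b) b; have e2 := d_sym HM (phi b) b; rewrite fab in h1; lra.
Qed.

End CaseC.

Lemma max_sep (X : Type) (op : set (set X)) d (HM : Metr op d) e : 0 < e ->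
  exists S, sepm d e S /\ forall x, ~ S x -> exists s, S s /\ d x s < e.
Proof.
move=> e0.
have [S [sS maxS]] := @Zorn_bigcup X (sepm d e)
  ltac:(move=> F FP tot a b [A FA Aa] [B FB Bb] nab;
        case: (tot A B FA FB) => [AB|BA];
        [exact: (FP B FB) a b (AB a Aa) Bb nab | exact: (FP A FA) a b Aa (BA b Bb) nab]).
exists S; split => // x nSx; apply: contrapT => H.
have far : forall s, S s -> e <= d x s.
  move=> s Ss; apply: Rnot_lt_le => h; apply: H; by exists s.
apply: (maxS (S `|` [set x])).
  split; first by move=> y Sy; left.
  by move=> h; apply: nSx; exact: (h x (or_intror erefl)).
move=> a b [Sa|->] [Sb|->] nab.
- exact: sS.
- by rewrite (d_sym HM); apply: far.
- exact: far.
- by exfalso; apply: nab.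
Qed.

Lemma separable_of (X : Type) (op : set (set X)) d (HM : Metr op d) (x0 : X) :
  (forall e S, 0 < e -> sepm d e S -> countable S) ->
  exists dd : nat -> X, forall x e, 0 < e -> exists k, d x (dd k) < e.
Proof.
move=> cS.
have [S HS] := choice (fun n : nat => max_sep HM (inv_pos n)).
have cD : countable (\bigcup_(n in [set: nat]) S n).
  apply: bigcup_countable => // n _; exact: (cS _ _ (inv_pos n) (proj1 (HS n))).
have [dd Hdd] := enum_of_countable x0 cD.
exists dd => x e e0; have [N HN] := arch e0.
case: (pselect (S N x)) => [Sx|nSx].
- have [k hk] := Hdd x (ex_intro2 _ _ N I Sx).
  by exists k; rewrite hk (d_xx HM).
- have [s [Ss ds]] := (proj2 (HS N)) x nSx.
  have [k hk] := Hdd s (ex_intro2 _ _ N I Ss).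
  by exists k; rewrite hk; lra.
Qed.

Lemma unc_nonFU (X : choiceType) (opX : set (set X)) (dX : X -> X -> R)
  (Y : Type) (opY : set (set Y)) (dY : Y -> Y -> R) (y0 y1 : Y) :
  Metr opX dX -> Metr opY dY -> y0 <> y1 -> ~ countable [set: X] ->
  ~ frechet_urysohn (Qp_open opX opY).
Proof.
move=> HX HY ne unc.
have [x0 _] := out_of_lists unc (fun _ => [::]).
case: (pselect (exists P, ~ countable P /\ Pcond dX P)) => [[P [ncP pc]]|nP].
- have [U [oU [inU outU]]] := Pfam HX pc.
  apply: (nonFU HX HY ne oU inU) => Gs.
  have [q [Pq nq]] := out_of_lists ncP Gs.
  by exists q => N; exists N; split => //; apply: outU.
- have hND : forall P, NDm dX P -> countable P.
    move=> P ndP; apply: contrapT => nc; apply: nP; exists P; split => //.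
    exact: Pcond_ND.
  have hsep : forall e S, 0 < e -> sepm dX e S -> countable S.
    move=> e S e0 sS; apply: contrapT => nc; apply: nP; exists S; split => //.
    exact: (Pcond_sep HX e0 sS).
  have [dd dense] := separable_of HX x0 hsep.
  have [U [oU [inU H3]]] := caseC HX unc hND dense.
  exact: (nonFU HX HY ne oU inU H3).
Qed.

Lemma unc_nonFC (X : Type) (opX : set (set X)) (dX : X -> X -> R)
  (Y : Type) (opY : set (set Y)) (dY : Y -> Y -> R) (y0 y1 : Y) :
  Metr opX dX -> Metr opY dY -> y0 <> y1 -> ~ countable [set: X] ->
  ~ first_countable (Qp_open opX opY).
Proof.
move=> HX HY ne unc FC.
pose z : Qp opX opY := exist _ (fun _ => y1) (@const_qc X Y opX opY y1).
have [B [HB1 HB2]] := FC z.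
have HF : forall n, exists F : seq X, exists V : X -> set Y,
    (forall x, List.In x F -> opY (V x) /\ V x y1) /\
    (forall g : Qp opX opY, (forall x, List.In x F -> V x (proj1_sig g x)) -> B n g).
  by move=> n; have [oB Bz] := HB1 n; exact: (oB z Bz).
have [Fs HFs] := choice HF.
have [q [_ nq]] := out_of_lists unc Fs.
have r0 : 0 < dY y0 y1 by apply: (d_pos HY).
have oB : Qp_open opX opY (fun f => dY y1 (proj1_sig f q) < dY y0 y1).
  move=> f hf; exists [:: q], (fun _ => fun y => dY y1 y < dY y0 y1); split.
  + by move=> x' [<-|[]]; split => //; exact: (ball_open HY).
  + by move=> g Hg; apply: Hg; left.
have [n Hn] := HB2 _ oB ltac:(by rewrite /= (d_xx HY)).
have [U [oU [inU outU]]] := Pfam HX (Pcond1 HX q).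
pose g : Qp opX opY := exist _ (gfun dX (U (Fs n)) y0 y1) (@gfun_qc X Y opX dX opY (U (Fs n)) y0 y1 HX (oU (Fs n))).
have [V [HV HB]] := HFs n.
have Bg : B n g.
  apply: HB => x hx /=; rewrite /gfun; destruct (pselect (clm dX (U (Fs n)) x)) as [c|nc].
  + exact: (proj2 (HV x hx)).
  + by exfalso; apply: nc; apply: inU.
have := Hn g Bg; rewrite /= /gfun; destruct (pselect (clm dX (U (Fs n)) q)) as [c|nc].
- by exfalso; apply: (outU (Fs n) q erefl (nq n)).
- rewrite (d_sym HY); lra.
Qed.

Local Close Scope R_scope.
Theorem corollary7p2 (X Y : topologicalType) :
  metrizable_top (@open X) -> metrizable_top (@open Y) ->
  nontrivial X -> nontrivial Y ->
  [/\ (countable [set: X] <->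
         frechet_urysohn (Qp_open (@open X) (discrete_top bool))),
      (countable [set: X] <-> frechet_urysohn (Qp_open (@open X) (@open Y))),
      (countable [set: X] <-> first_countable (Qp_open (@open X) (@open Y))) &
      (countable [set: X] <-> metrizable_top (Qp_open (@open X) (@open Y)))].
Proof.
move=> [dX HX] [dY HY] [x0 [x1 nx]] [y0 [y1 ny]].
have HX' : Metr (@open X) dX := HX.
have HY' : Metr (@open Y) dY := HY.
have tf : true <> false by [].
split.
- split => [c|fu].
  + have [d Hd] := countable_Qp_metr (@open X) x0 discrete_metr c; exact: metr_FU Hd.
  + apply: contrapT => nc; exact: (unc_nonFU HX' discrete_metr tf nc fu).
- split => [c|fu].
  + have [d Hd] := countable_Qp_metr (@open X) x0 HY' c; exact: metr_FU Hd.
  + apply: contrapT => nc; exact: (unc_nonFU HX' HY' ny nc fu).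
- split => [c|fc].
  + have [d Hd] := countable_Qp_metr (@open X) x0 HY' c; exact: metr_FC Hd.
  + apply: contrapT => nc; exact: (unc_nonFC HX' HY' ny nc fc).
- split => [c|[d Hd]].
  + exact: (countable_Qp_metr (@open X) x0 HY' c).
  + apply: contrapT => nc; exact: (unc_nonFU HX' HY' ny nc (metr_FU Hd)).
Qed.
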